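(* Let $Q$ be a quadratical quasigroup of order $25$ whose elements are ordered in some way. If $Q$ is $k$-translatable with respect to this ordering, with $1\le k<25$, then $k=7$ or $k=18$.
   Context: A quadratical quasigroup is a quasigroup satisfying $xy\cdot x=zx\cdot yz$ for all $x,y,z$ (equivalently, a groupoid satisfying $x\cdot x=x$, $yx\cdot xy=x$, $xy\cdot zw=xz\cdot yw$). A finite groupoid with ordering $q_1,\dots,q_n$ is $k$-translatable ($1\le k<n$) with respect to this ordering if $q_i\cdot q_j=q_{i-1}\cdot q_{j-k}$ for all $i\in\{2,\dots,n\}$, $j\in\{1,\dots,n\}$, indices taken modulo $n$ in $\{1,\dots,n\}$. *)

(* Defs.v *)
From mathcomp Require Import all_boot.
Set Implicit Arguments. Unset Strict Implicit. Unset Printing Implicit Defensive.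

Definition quasigroup (T : Type) (op : T -> T -> T) : Prop :=
  (forall a : T, bijective (op a)) /\ (forall a : T, bijective (fun x => op x a)).

Definition quadratical (T : Type) (op : T -> T -> T) : Prop :=
  forall x y z : T, op (op x y) x = op (op z x) (op y z).

(* Ordering q_1..q_n is encoded 0-based: q : 'I_n -> T, with q i standing
   for q_{i+1}.  Indices are taken modulo n.  k-translatable: for all
   i in {2..n} (0-based: 1 <= i < n) and all j,
   q_i * q_j = q_{i-1} * q_{j-k}. *)
(* The order is written m.+1 so that indices mod m.+1 can be built with inord. *)
Definition translatable (T : Type) (m : nat) (op : T -> T -> T)
  (q : 'I_m.+1 -> T) (k : nat) : Prop :=
  forall i j : 'I_m.+1, 1 <= i ->
    op (q i) (q j)
    = op (q (inord i.-1)) (q (inord ((j + m.+1 - k %% m.+1) %% m.+1))).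

(* Main.v *)
Require Import Defs.
From mathcomp Require Import all_boot.
From mathcomp Require Import zify.

Theorem corollary8p18 (T : finType) (op : T -> T -> T) (q : 'I_25 -> T) (k : nat) :
  #|T| = 25 -> bijective q -> quasigroup op -> quadratical op ->
  1 <= k < 25 -> translatable op q k ->
  k = 7 \/ k = 18.
Proof.
move=> _ bq [lq _] quad /andP[k1 k25] tr.
have qinj : injective q by apply: bij_inj.
have linj : forall a, injective (op a) by move=> a; apply: bij_inj.
have idem : forall a, op a a = a.
  by move=> a; apply: (linj (op a a)); rewrite -quad.
pose r (t : nat) : 'I_25 := inord (t %% 25).
have rval : forall t, nat_of_ord (r t) = t %% 25.
  by move=> t; rewrite /r inordK // ltn_mod.
have rmod : forall t, r (t %% 25) = r t by move=> t; rewrite /r modn_mod.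
pose K := 25 - k.
pose H t := op (q (r 0)) (q (r t)).
have step : forall i j, i < 24 ->
    op (q (r i.+1)) (q (r j)) = op (q (r i)) (q (r (j + K))).
  move=> i j hi.
  have h1 : 1 <= r i.+1 by rewrite rval modn_small.
  rewrite (tr _ _ h1); congr (op (q _) (q _)); apply: val_inj; rewrite /= ?rval.
    by rewrite inordK ?modn_small //; lia.
  rewrite (modn_small k25).
  have -> : j %% 25 + 25 - k = j %% 25 + K by rewrite /K; lia.
  by rewrite modnDml.
have tall0 : forall i j, i < 25 -> op (q (r i)) (q (r j)) = H (j + i * K).
  elim=> [|i IH] j hi; first by rewrite /H mul0n addn0.
  rewrite step; last by lia.
  by rewrite IH; [rewrite /H -addnA mulSn | lia].
have tall : forall i j, op (q (r i)) (q (r j)) = H (j + i * K).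
  move=> i j; rewrite -rmod tall0 ?ltn_mod //.
  rewrite /H; congr (op _ (q _)); rewrite -rmod -[RHS]rmod; congr r.
  by rewrite -[LHS]modnDmr modnMml modnDmr.
have B : forall t, H (t + t * K) = q (r t).
  by move=> t; rewrite -tall idem.
pose u := 26 - k.
have e1 : op (q (r 0)) (q (r u)) = q (r 1).
  rewrite -(B 1) /H; congr (op _ (q (r _))); rewrite /u /K; lia.
have e2 : op (q (r u)) (q (r 0)) = q (r K).
  rewrite -(B K) tall; congr (H _); rewrite /u /K; lia.
have := quad (q (r 0)) (q (r u)) (q (r u)).
rewrite e1 e2 idem tall tall /H => /linj /qinj /(congr1 val).
rewrite /= !rval /u /K.
move=> E; clear -k1 k25 E.
have : (k == 7) || (k == 18).
  move/eqP: E; move: k1 k25; do 25 (case: k => [|k]; first by []).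
  by [].
by case/orP=> /eqP ->; [left|right].
Qed.
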